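(* Let $g_1,\dots,g_r\in\mathbb R[X_1,\dots,X_n]$, $S=\mathcal S(\mathbf g)$, and assume the CQC holds at $z\in S$. Then there exist $\epsilon''=\epsilon''(z)>0$ and $\mathfrak c''=\mathfrak c''(z)>0$ such that for all $y\in[-1,1]^n$ with $D(y)=\operatorname{dist}(y,S)=\|y-z\|_2$ and $D(y)\le\epsilon''$, we have $D(y)\le\mathfrak c''\,G(y)$.
   Context: $\mathcal S(\mathbf g)=\{x:g_i(x)\ge0\ \forall i\}$; $G(y)=|\min\{g_1(y),\dots,g_r(y),0\}|$, $D(y)=\operatorname{dist}(y,S)$ (Euclidean) on $[-1,1]^n$. Active constraints at $z$: the $g_i$ with $g_i(z)=0$; CQC at $z$: the gradients of the active constraints at $z$ are linearly independent. *)

(* Defs.v *)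
From HB Require Import structures.
From mathcomp Require Import all_boot all_order all_algebra.
From mathcomp Require Import classical_sets reals.
From mathcomp Require Import mpoly.
Set Implicit Arguments. Unset Strict Implicit. Unset Printing Implicit Defensive.
Import Order.TTheory GRing.Theory Num.Theory.
Local Open Scope ring_scope.
Local Open Scope classical_set_scope.

Section Defs.
Variables (R : realType) (n r : nat).
Implicit Types (g : 'I_r -> {mpoly R[n]}) (x y z : 'I_n -> R).

Definition dist2 x y : R := Num.sqrt (\sum_(k < n) (x k - y k) ^+ 2).

Definition semialg g : set ('I_n -> R) := [set x | forall i, 0 <= (g i).@[x]].

Definition Dist g y : R := inf [set dist2 y x | x in semialg g].

Definition Gviol g y : R := `| \big[Num.min/0]_(i < r) (g i).@[y] |.

Definition grad (p : {mpoly R[n]}) z : 'rV[R]_n :=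
  \row_(k < n) (mderiv k p).@[z].

Definition CQC g z : Prop :=
  free [seq grad (g i) z | i <- enum 'I_r & (g i).@[z] == 0].

Definition in_cube y : Prop := forall k, -1 <= y k <= 1.

End Defs.

(* Main.v *)
Require Import Defs.
From HB Require Import structures.
From mathcomp Require Import all_boot all_order all_algebra.
From mathcomp Require Import classical_sets reals.
From mathcomp Require Import mpoly.
From mathcomp Require Import ring lra.
Import Order.TTheory GRing.Theory Num.Theory.
Local Open Scope ring_scope.

Lemma lin_sol (R : realType) n (X : seq 'rV[R]_n) : free X ->
  exists w : 'cV[R]_n, forall v, v \in X -> (v *m w) 0 0 = 1.
Proof.
move=> fX.
pose A := \matrix_(j < size X) X`_j.
have rA : row_free A.
  rewrite -kermx_eq0; apply/rowV0P => u /sub_kermxP uA0.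
  apply/rowP => i; rewrite mxE.
  move: fX; rewrite -[X]/(tval (in_tuple X)) => /vector.freeP => /(_ (fun i => u 0 i)) H; apply: H.
  by rewrite -[in RHS]uA0 mulmx_sum_row; apply: eq_bigr => j _; rewrite rowK.
have /row_freeP [B AB] := rA.
exists (B *m const_mx 1) => v vX.
have ix : (index v X < size X)%N by rewrite index_mem.
have -> : v = row (Ordinal ix) A by rewrite rowK /= nth_index.
rewrite mulmxA -row_mul AB.
by rewrite -row_mul mul1mx !mxE.
Qed.

Set Implicit Arguments. Unset Strict Implicit. Unset Printing Implicit Defensive.

Lemma tay_arith (R : realType) (P Q dP dQ a b s C1 C2 M1 M1' M2 M2' : R) :
  0 <= s <= 1 -> `|P| <= M1 -> `|dP| <= M1' -> `|Q| <= M2 -> `|dQ| <= M2' ->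
  `|a - P - s * dP| <= C1 * s ^+ 2 -> `|b - Q - s * dQ| <= C2 * s ^+ 2 -> 0 <= C1 -> 0 <= C2 ->
  `|a * b - P * Q - s * (dP * Q + P * dQ)| <=
    (M1' * M2' + C2 * (M1 + M1') + C1 * (M2 + M2' + C2)) * s ^+ 2.
Proof.
move=> /andP[s0 s1] hP hdP hQ hdQ h1 h2 C10 C20.
set e1 := a - P - s * dP in h1; set e2 := b - Q - s * dQ in h2.
have -> : a * b - P * Q - s * (dP * Q + P * dQ) =
   s ^+ 2 * (dP * dQ) + e2 * (P + s * dP) + e1 * (Q + s * dQ + e2).
  by rewrite /e1 /e2; ring.
have ss : s ^+ 2 <= 1 by rewrite expr_le1.
have s20 : 0 <= s ^+ 2 by rewrite exprn_ge0.
have hM1 : 0 <= M1 by apply: le_trans hP.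
have hM1' : 0 <= M1' by apply: le_trans hdP.
have hM2 : 0 <= M2 by apply: le_trans hQ.
have hM2' : 0 <= M2' by apply: le_trans hdQ.
have t1 : `|s ^+ 2 * (dP * dQ)| <= M1' * M2' * s ^+ 2.
  rewrite normrM (ger0_norm s20) mulrC normrM ler_wpM2r //.
  by apply: ler_pM.
have t2 : `|e2 * (P + s * dP)| <= C2 * (M1 + M1') * s ^+ 2.
  rewrite normrM mulrAC ler_pM //.
  apply: le_trans (ler_normD _ _) _; apply: lerD => //.
  rewrite normrM (ger0_norm s0); rewrite -[M1']mul1r ler_pM //.
have he2 : `|e2| <= C2 by apply: le_trans h2 _; rewrite -[leRHS]mulr1 ler_wpM2l.
have t3 : `|e1 * (Q + s * dQ + e2)| <= C1 * (M2 + M2' + C2) * s ^+ 2.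
  rewrite normrM mulrAC ler_pM //.
  apply: le_trans (ler_normD _ _) _; apply: lerD => //.
  apply: le_trans (ler_normD _ _) _; apply: lerD => //.
  rewrite normrM (ger0_norm s0); rewrite -[M2']mul1r ler_pM //.
apply: le_trans (ler_normD _ _) _.
have -> : (M1' * M2' + C2 * (M1 + M1') + C1 * (M2 + M2' + C2)) * s ^+ 2
  = M1' * M2' * s ^+ 2 + C2 * (M1 + M1') * s ^+ 2 + C1 * (M2 + M2' + C2) * s ^+ 2 by ring.
apply: lerD => //.
apply: le_trans (ler_normD _ _) _.
by apply: lerD.
Qed.

Section Poly.
Variables (R : realType) (n : nat) (z w : 'I_n -> R).

Definition N1d (x y : 'I_n -> R) : R := \sum_k `|x k - y k|.
Definition box x := N1d x z <= 1.
Definition LipF (f : ('I_n -> R) -> R) :=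
  exists L, 0 <= L /\ forall x y, box x -> box y -> `|f x - f y| <= L * N1d x y.

Lemma N1d_ge0 x y : 0 <= N1d x y.
Proof. by apply: sumr_ge0 => k _; rewrite normr_ge0. Qed.

Lemma N1d_coord x y k : `|x k - y k| <= N1d x y.
Proof.
rewrite /N1d (bigD1 k) //= lerDl; by apply: sumr_ge0 => j _; rewrite normr_ge0.
Qed.

Lemma N1dxx x : N1d x x = 0.
Proof. by rewrite /N1d big1 // => k _; rewrite subrr normr0. Qed.

Lemma box_z : box z.
Proof. by rewrite /box N1dxx ler01. Qed.

Lemma LipF_bnd f : LipF f -> exists M, 0 <= M /\ forall x, box x -> `|f x| <= M.
Proof.
move=> [L [L0 HL]]; exists (`|f z| + L); split.
  by apply: addr_ge0.
move=> x bx; have := HL x z bx box_z.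
have : L * N1d x z <= L by rewrite -[leRHS]mulr1 ler_wpM2l.
have := ler_distD (f z) (f x) 0. rewrite !subr0.
move=> h1 h2 h3. 
have: `|f x| <= `|f z| + `|f x - f z|.
  by have := ler_normD (f z) (f x - f z); rewrite addrC subrK addrC.
lra.
Qed.

Lemma LipF_ext f g : f =1 g -> LipF f -> LipF g.
Proof. by move=> fg [L [L0 H]]; exists L; split=> // x y bx b2; rewrite -!fg; apply: H. Qed.

Lemma LipF_cst c : LipF (fun _ => c).
Proof. by exists 0; split=> // x y _ _; rewrite subrr normr0 mul0r. Qed.

Lemma LipF_coord i : LipF (fun x => x i).
Proof. by exists 1; split=> // x y _ _; rewrite mul1r N1d_coord. Qed.

Lemma LipF_add f g : LipF f -> LipF g -> LipF (fun x => f x + g x).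
Proof.
move=> [L1 [L10 H1]] [L2 [L20 H2]]; exists (L1 + L2); split; first exact: addr_ge0.
move=> x y bx bY; have := H1 x y bx bY; have := H2 x y bx bY.
have -> : f x + g x - (f y + g y) = (f x - f y) + (g x - g y) by ring.
move=> h2 h1; apply: le_trans (ler_normD _ _) _; rewrite mulrDl; exact: lerD.
Qed.

Lemma LipF_mul f g : LipF f -> LipF g -> LipF (fun x => f x * g x).
Proof.
move=> Lf Lg; have [Mf [Mf0 Bf]] := LipF_bnd Lf; have [Mg [Mg0 Bg]] := LipF_bnd Lg.
move: Lf Lg => [L1 [L10 H1]] [L2 [L20 H2]].
exists (Mf * L2 + Mg * L1); split.
  by apply: addr_ge0; apply: mulr_ge0.
move=> x y bx bY.
have -> : f x * g x - f y * g y = f x * (g x - g y) + g y * (f x - f y) by ring.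
apply: le_trans (ler_normD _ _) _; rewrite mulrDl -!mulrA; apply: lerD;
  rewrite normrM; apply: ler_pM => //; by [apply: Bf | apply: H2 | apply: Bg | apply: H1].
Qed.


Definition Dwp (p : {mpoly R[n]}) : {mpoly R[n]} := \sum_k w k *: mderiv k p.
Definition shift (y : 'I_n -> R) (s : R) : 'I_n -> R := fun k => y k + s * w k.
Definition TayP (p : {mpoly R[n]}) := exists C, 0 <= C /\ forall y s, box y -> 0 <= s <= 1 ->
  `|p.@[shift y s] - p.@[y] - s * (Dwp p).@[y]| <= C * s ^+ 2.
Definition good p := LipF (fun x => p.@[x]) /\ LipF (fun x => (Dwp p).@[x]) /\ TayP p.

Lemma Dwp_add p q : Dwp (p + q) = Dwp p + Dwp q.
Proof. by rewrite /Dwp -big_split; apply: eq_bigr => k _; rewrite mderivD scalerDr. Qed.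

Lemma Dwp_mul p q : Dwp (p * q) = Dwp p * q + p * Dwp q.
Proof.
rewrite /Dwp mulr_suml mulr_sumr -big_split; apply: eq_bigr => k _.
by rewrite mderivM scalerDr scalerAl scalerAr.
Qed.

Lemma Dwp_C c : Dwp c%:MP = 0.
Proof. by rewrite /Dwp big1 // => k _; rewrite mderivC scaler0. Qed.

Lemma Dwp_X i y : (Dwp 'X_i).@[y] = w i.
Proof.
rewrite /Dwp raddf_sum (bigD1 i) //= big1 ?addr0.
  rewrite mevalZ mderivX mnm1E eqxx.
  have -> : (true%:R : R) = 1 by [].
  have -> : (U_(i) - U_(i))%MM = 0%MM by apply/mnmP => j; rewrite mnmBE mnm0E subnn.
  by rewrite scale1r mpolyX0 meval1 mulr1.
move=> k ki; rewrite mevalZ mderivX mnm1E eq_sym (negbTE ki) scale0r meval0 mulr0 //.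
Qed.

Lemma good_C c : good c%:MP.
Proof.
split; first by apply: (LipF_ext _ (LipF_cst c)) => x; rewrite mevalC.
split; first by apply: (LipF_ext _ (LipF_cst 0)) => x; rewrite Dwp_C meval0.
exists 0; split=> // y s _ _; rewrite !mevalC Dwp_C meval0 !subrr mulr0 subr0 normr0 mul0r //.
Qed.

Lemma good_X i : good 'X_i.
Proof.
split; first by apply: (LipF_ext _ (LipF_coord i)) => x; rewrite mevalXU.
split; first by apply: (LipF_ext _ (LipF_cst (w i))) => x; rewrite Dwp_X.
exists 0; split=> // y s _ _; rewrite !mevalXU Dwp_X /shift.
have -> : y i + s * w i - y i - s * w i = 0 by ring.
by rewrite normr0 mul0r.
Qed.

Lemma good_add p q : good p -> good q -> good (p + q).
Proof.
move=> [Lp [Ldp [Cp [Cp0 Tp]]]] [Lq [Ldq [Cq [Cq0 Tq]]]].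
split; first by apply: (LipF_ext _ (LipF_add Lp Lq)) => x; rewrite mevalD.
split; first by apply: (LipF_ext _ (LipF_add Ldp Ldq)) => x; rewrite Dwp_add mevalD.
exists (Cp + Cq); split; first exact: addr_ge0.
move=> y s bY hs; have := Tp y s bY hs; have := Tq y s bY hs.
rewrite Dwp_add !mevalD.
set a := p.@[_]; set b := q.@[_]; set c := p.@[y]; set d := q.@[y].
set e := (Dwp p).@[y]; set f := (Dwp q).@[y].
have -> : a + b - (c + d) - s * (e + f) = (a - c - s * e) + (b - d - s * f) by ring.
move=> h2 h1; apply: le_trans (ler_normD _ _) _; rewrite mulrDl; exact: lerD.
Qed.

Lemma good_mul p q : good p -> good q -> good (p * q).
Proof.
move=> [Lp [Ldp [Cp [Cp0 Tp]]]] [Lq [Ldq [Cq [Cq0 Tq]]]].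
have [M1 [_ B1]] := LipF_bnd Lp; have [M1' [_ B1']] := LipF_bnd Ldp.
have [M2 [_ B2]] := LipF_bnd Lq; have [M2' [_ B2']] := LipF_bnd Ldq.
split; first by apply: (LipF_ext _ (LipF_mul Lp Lq)) => x; rewrite mevalM.
split.
  apply: (LipF_ext _ (LipF_add (LipF_mul Ldp Lq) (LipF_mul Lp Ldq))) => x.
  by rewrite Dwp_mul mevalD !mevalM.
exists (M1' * M2' + Cq * (M1 + M1') + Cp * (M2 + M2' + Cq)); split.
  have := normr_ge0 (p.@[z]); have := normr_ge0 (q.@[z]).
  have := normr_ge0 ((Dwp p).@[z]); have := normr_ge0 ((Dwp q).@[z]).
  have := B1 z box_z; have := B2 z box_z; have := B1' z box_z; have := B2' z box_z.
  move=> *; apply: addr_ge0; first apply: addr_ge0.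
  - apply: mulr_ge0; lra.
  - apply: mulr_ge0 => //; lra.
  - apply: mulr_ge0 => //; lra.
move=> y s bY hs.
rewrite Dwp_mul mevalD !mevalM.
apply: tay_arith => //; by [apply: B1 | apply: B1' | apply: B2 | apply: B2' | apply: Tp | apply: Tq].
Qed.

Lemma good_all p : good p.
Proof.
elim/mpolyind: p => [|c m p _ _ gp].
  by rewrite -mpolyC0; apply: good_C.
apply: good_add => //; rewrite -mul_mpolyC; apply: good_mul; first exact: good_C.
rewrite mpolyXE_id; apply: (big_ind good) => //; first by rewrite -mpolyC1; apply: good_C.
  by move=> a b; apply: good_mul.
move=> i _; elim: (m i) => [|k IH]; first by rewrite expr0 -mpolyC1; apply: good_C.
by rewrite exprS; apply: good_mul => //; apply: good_X.
Qed.

End Poly.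

Lemma unif_max (R : realType) (I : eqType) (P : I -> R -> Prop) (s : seq I) :
  (forall i L L', L <= L' -> P i L -> P i L') ->
  (forall i, exists L, 0 <= L /\ P i L) ->
  exists L, 0 <= L /\ forall i, i \in s -> P i L.
Proof.
move=> mono ex; elim: s => [|a s [L [L0 HL]]]; first by exists 0.
have [La [La0 Ha]] := ex a; exists (Num.max L La); split; first by rewrite le_max L0.
move=> i; rewrite in_cons => /orP [/eqP -> | /HL h].
  by apply: (mono a La) => //; rewrite le_max lexx orbT.
by apply: (mono i L) => //; rewrite le_max lexx.
Qed.

Lemma unif_min (R : realType) (I : eqType) (P : I -> R -> Prop) (s : seq I) :
  (forall i L L', L' <= L -> P i L -> P i L') ->
  (forall i, exists L, 0 < L /\ P i L) ->
  exists L, 0 < L /\ forall i, i \in s -> P i L.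
Proof.
move=> mono ex; elim: s => [|a s [L [L0 HL]]]; first by exists 1.
have [La [La0 Ha]] := ex a; exists (Num.min L La); split; first by rewrite lt_min L0.
move=> i; rewrite in_cons => /orP [/eqP -> | /HL h].
  by apply: (mono a La) => //; rewrite ge_min lexx orbT.
by apply: (mono i L) => //; rewrite ge_min lexx.
Qed.

Lemma sumsq_le (R : realType) (I : Type) (s : seq I) (F : I -> R) :
  \sum_(i <- s) F i ^+ 2 <= (\sum_(i <- s) `|F i|) ^+ 2.
Proof.
elim: s => [|a s IH]; first by rewrite !big_nil expr2 mul0r.
rewrite !big_cons.
have S0 : 0 <= \sum_(i <- s) `|F i| by apply: sumr_ge0 => i _; rewrite normr_ge0.
rewrite -(real_normK (num_real (F a))).
have := normr_ge0 (F a); nra.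
Qed.

Lemma dist2_le_N1 (R : realType) n (x y : 'I_n -> R) : dist2 x y <= N1d x y.
Proof.
rewrite /dist2 -(ger0_norm (N1d_ge0 x y)) -sqrtr_sqr ler_sqrt ?exprn_ge0 //.
  exact: sumsq_le.
exact: N1d_ge0.
Qed.

Lemma coord_le_dist2 (R : realType) n (x y : 'I_n -> R) k : `|x k - y k| <= dist2 x y.
Proof.
have H0 : 0 <= \sum_(j < n) (x j - y j) ^+ 2 by apply: sumr_ge0 => j _; exact: sqr_ge0.
rewrite /dist2 -sqrtr_sqr ler_sqrt //.
rewrite (bigD1 k) //= lerDl; apply: sumr_ge0 => j _; exact: sqr_ge0.
Qed.

Lemma Dwp_eval (R : realType) n (w : 'I_n -> R) p v :
  (Dwp w p).@[v] = \sum_k w k * (mderiv k p).@[v].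
Proof. rewrite /Dwp raddf_sum; apply: eq_bigr => k _; exact: mevalZ. Qed.

Lemma inv_bound (R : realType) (Q a : R) : 0 < Q -> a <= Q -> a * Q^-1 <= 1.
Proof. by move=> Q0 aQ; rewrite -/(a / Q) ler_pdivrMr // mul1r. Qed.

Theorem mainTheorem12 (R : realType) (n r : nat) (g : 'I_r -> {mpoly R[n]})
  (z : 'I_n -> R) (hzS : semialg g z) (hcqc : CQC g z) :
  exists eps c : R, 0 < eps /\ 0 < c /\
    forall y : 'I_n -> R, in_cube y ->
      Dist g y = dist2 y z -> Dist g y <= eps ->
      Dist g y <= c * Gviol g y.
Proof.
have [wc Hw] := @lin_sol _ _ _ hcqc.
pose w k := wc k 0.
have act : forall i, (g i).@[z] = 0 -> (Dwp w (g i)).@[z] = 1.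
  move=> i gi0.
  have iX : grad (g i) z \in [seq grad (g i) z | i <- enum 'I_r & (g i).@[z] == 0].
    by apply: map_f; rewrite mem_filter mem_enum gi0 eqxx.
  move: (Hw _ iX); rewrite mxE => <-; rewrite Dwp_eval.
  by apply: eq_bigr => k _; rewrite /grad mxE mulrC.
have [L [L0 HL]] := unif_max (enum 'I_r)
  (P := fun i L => forall x y, box z x -> box z y ->
     `|(g i).@[x] - (g i).@[y]| <= L * N1d x y)
  (fun i L L' LL' H x y bx b2 => le_trans (H x y bx b2) (ler_wpM2r (N1d_ge0 x y) LL'))
  (fun i => proj1 (good_all z w (g i))).
have [L' [L'0 HL']] := unif_max (enum 'I_r)
  (P := fun i L => forall x y, box z x -> box z y ->
     `|(Dwp w (g i)).@[x] - (Dwp w (g i)).@[y]| <= L * N1d x y)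
  (fun i L L' LL' H x y bx b2 => le_trans (H x y bx b2) (ler_wpM2r (N1d_ge0 x y) LL'))
  (fun i => proj1 (proj2 (good_all z w (g i)))).
have [C [C0 HC]] := unif_max (enum 'I_r)
  (P := fun i C => forall y s, box z y -> 0 <= s <= 1 ->
     `|(g i).@[shift w y s] - (g i).@[y] - s * (Dwp w (g i)).@[y]| <= C * s ^+ 2)
  (fun i L L' LL' H y s bY hs => le_trans (H y s bY hs) (ler_wpM2r (exprn_ge0 2 (andP hs).1) LL'))
  (fun i => proj2 (proj2 (good_all z w (g i)))).
have exm : forall i, exists a : R, 0 < a /\ ((g i).@[z] != 0 -> a <= (g i).@[z]).
  move=> i; case: (eqVneq (g i).@[z] 0) => gz.
    by exists 1; split=> //; rewrite gz eqxx.
  exists (g i).@[z]; split=> //; rewrite lt0r gz /=; exact: hzS.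
have [m [m0 Hm]] := unif_min (enum 'I_r)
  (P := fun i a => (g i).@[z] != 0 -> a <= (g i).@[z])
  (fun i a a' aa' H h => le_trans aa' (H h)) exm.
set Nw := \sum_k `|w k|.
have Nw0 : 0 <= Nw by apply: sumr_ge0 => k _; rewrite normr_ge0.
set Q := 1 + 4 * L + (1 + 4 * L * Nw) + 2 * L' + 16 * C * L + (L + 4 * L ^+ 2 * Nw) / m.
have LNw0 : 0 <= L * Nw by apply: mulr_ge0.
have CL0 : 0 <= C * L by apply: mulr_ge0.
have LLNw0 : 0 <= (L + 4 * L ^+ 2 * Nw) / m.
  apply: divr_ge0; last exact: ltW.
  by apply: addr_ge0 => //; apply: mulr_ge0 => //; apply: mulr_ge0 => //; apply: exprn_ge0.
have Q1 : 1 <= Q by rewrite /Q; lra.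
have Q0 : 0 < Q by lra.
set d := Q^-1.
have d0 : 0 < d by rewrite invr_gt0.
have bnd : forall a, a <= Q -> a * d <= 1 by move=> a aQ; exact: inv_bound.
have d1 : d <= 1 by rewrite -[d]mul1r; apply: bnd.
have c1 : 4 * L * d <= 1 by apply: bnd; rewrite /Q; lra.
have c2 : (1 + 4 * L * Nw) * d <= 1 by apply: bnd; rewrite /Q; lra.
have c3 : 2 * L' * d <= 1 by apply: bnd; rewrite /Q; lra.
have c4 : 16 * C * L * d <= 1 by apply: bnd; rewrite /Q; lra.
have c5 : (L + 4 * L ^+ 2 * Nw) * d <= m.
  have : (L + 4 * L ^+ 2 * Nw) / m * d <= 1 by apply: bnd; rewrite /Q; lra.
  by rewrite mulrAC ler_pdivrMr // mul1r.
set N := n%:R : R.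
have N0 : 0 <= N by rewrite /N ler0n.
exists (d / (N + 1)), (4 * Nw + 1).
split; first by apply: divr_gt0 => //; lra.
split; first by lra.
move=> y _ HD Heps; rewrite HD in Heps.
have hyz : N1d y z <= d.
  apply: (@le_trans _ _ (\sum_(k < n) dist2 y z)).
    by apply: ler_sum => k _; exact: coord_le_dist2.
  rewrite sumr_const card_ord -mulr_natl -/N.
  apply: (@le_trans _ _ (N * (d / (N + 1)))); first by apply: ler_wpM2l.
  rewrite mulrCA ger_pMr // ler_pdivrMr; lra.
have bY : box z y by rewrite /box; lra.
set mn := \big[Num.min/0]_(i < r) (g i).@[y].
have mn0 : mn <= 0 by apply: bigmin_le_id.
set G := Gviol g y.
have GE : G = - mn by rewrite /G /Gviol -/mn ler0_norm.
have G0 : 0 <= G by rewrite GE; lra.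
have hGi : forall i, - G <= (g i).@[y].
  by move=> i; rewrite GE opprK; apply: bigmin_le.
have hLd : 0 <= L * d by apply: mulr_ge0 => //; exact: ltW.
have hgz : forall i x, box z x -> N1d x z <= d -> - (L * d) <= (g i).@[x] - (g i).@[z] <= L * d.
  move=> i x bx hx; rewrite -ler_norml; apply: le_trans (HL i (mem_enum _ _) x z bx (box_z z)) _.
  by apply: ler_wpM2l.
have hGL : G <= L * d.
  suff : - (L * d) <= mn by rewrite GE; lra.
  apply: le_bigmin; first lra.
  move=> i _; have := hgz i y bY hyz; have := hzS i; lra.
set s := 4 * G.
have s0 : 0 <= s by rewrite /s; lra.
have s1 : s <= 1 by rewrite /s; lra.
have hs : 0 <= s <= 1 by rewrite s0 s1.
set x := shift w y s.
have hxz : N1d x z <= N1d y z + s * Nw.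
  rewrite /N1d mulr_sumr -big_split; apply: ler_sum => k _.
  rewrite /x /shift.
  have -> : y k + s * w k - z k = (y k - z k) + s * w k by ring.
  apply: le_trans (ler_normD _ _) _; rewrite normrM (ger0_norm s0).
  by [].
have sNw : s * Nw <= 4 * L * d * Nw by apply: ler_wpM2r => //; rewrite /s; lra.
have bx : box z x by rewrite /box; nra.
have xS : semialg g x.
  move=> i; case: (eqVneq (g i).@[z] 0) => gz.
  - have Di := act i gz.
    have := HL' i (mem_enum _ _) y z bY (box_z z); rewrite Di => hD.
    have hD' : 1 - L' * d <= (Dwp w (g i)).@[y].
      have : L' * N1d y z <= L' * d by apply: ler_wpM2l.
      move: hD; rewrite ler_norml; lra.
    have hD2 : 1 / 2 <= (Dwp w (g i)).@[y] by lra.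
    have h1 : s / 2 <= s * (Dwp w (g i)).@[y].
      by rewrite -[s / 2]/(s * 2^-1) ler_wpM2l // -[2^-1]mul1r.
    have h3 : 16 * C * G <= 1.
      apply: le_trans c4; rewrite -!mulrA; apply: ler_wpM2l => //; apply: ler_wpM2l => //.
    have h4 : 16 * C * G * G <= G by rewrite -[leRHS]mul1r; apply: ler_wpM2r.
    have h2 : C * s ^+ 2 = 16 * C * G * G by rewrite /s; ring.
    have := HC i (mem_enum _ _) y s bY hs; rewrite h2 ler_norml.
    have sE : s = 4 * G by [].
    have := hGi i; lra.
  - have mi := Hm i (mem_enum _ _) gz.
    have hxd : N1d x z <= (1 + 4 * L * Nw) * d by nra.
    have : `|(g i).@[x] - (g i).@[z]| <= L * N1d x z.
      exact: (HL i (mem_enum _ _) x z bx (box_z z)).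
    have : L * N1d x z <= (L + 4 * L ^+ 2 * Nw) * d.
      apply: le_trans (ler_wpM2l L0 hxd) _; rewrite mulrA mulrDr mulr1 !mulrA; lra.
    rewrite ler_norml; lra.
have hD : Dist g y <= dist2 y x.
  rewrite /Dist; apply: ge_inf; last by exists x.
  by exists 0 => _ [x' _ <-]; apply: sqrtr_ge0.
have hdx : dist2 y x <= s * Nw.
  apply: le_trans (dist2_le_N1 _ _) _; rewrite /N1d mulr_sumr; apply: ler_sum => k _.
  rewrite /x /shift; have -> : y k - (y k + s * w k) = - (s * w k) by ring.
  by rewrite normrN normrM (ger0_norm s0).
have : s * Nw <= (4 * Nw + 1) * G by rewrite /s; nra.
lra.
Qed.
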